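(* Let $N\ge1$ be an integer, $d>0$, $0\le s_1\le\dots\le s_N$, and let $T\ge (N+1)d$. Let (P) be the problem $$\min_{x\in\mathbb{R}^{N+1}}\ \sum_{i=1}^{N+1}x_i^2$$ subject to - $\sum_{i=1}^k x_i\ge s_k+kd$ for $1\le k\le N$, - $x_i\ge 2d$ for $2\le i\le N$, - $x_{N+1}\ge d$, - $\sum_{i=1}^{N+1}x_i=T+Nd$. Assume (P) is feasible, and let $x^*$ be its optimal solution. Let $(P^e)$ be the same problem without the constraints $x_i\ge 2d$ ($2\le i\le N$) and $x_{N+1}\ge d$, and let $x^e$ be the optimal solution of $(P^e)$. If $x_i^e\ge 2d$ for all $2\le i\le N$ and $x_{N+1}^e\ge d$, then $x^*=x^e$. Otherwise, let $n_0$ be the smallest index $i\in\{2,\dots,N+1\}$ at which $x^e$ violates its constraint in (P), meaning $x_i^e<2d$ if $i\le N$, or $x_{N+1}^e<d$ if $i=N+1$. Then $n_0\le N$, and the following hold. - If $n_0>2$, then $x_i^*=x_i^e$ for $1\le i\le n_0-1$, $x_i^*=2d$ for $n_0\le i\le N$, and $x_{N+1}^*=T+Nd-\sum_{i=1}^N x_i^*$. - If $n_0=2$ and $x_1^e=s_1+d$, then $x^*$ is given by the same formulas with $n_0=2$. - If $n_0=2$ and $x_1^e\ne s_1+d$, then $x_1^*=\max\left\{\frac{T-(N-2)d}{2},\ \max_{1\le k\le N}\{s_k-(k-2)d\}\right\}$, $x_i^*=2d$ for $2\le i\le N$, and $x_{N+1}^*=T-(N-2)d-x_1^*$.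
   Context: This optimization problem arises from minimizing the area under the age-of-information curve of a single energy harvesting transmitter with energy arrival times $s_k$, fixed service time $d$, and session length $T$. Both (P) and $(P^e)$ have strictly convex objectives, so their optimal solutions are unique whenever they exist. *)

(* Defs.v *)
(* R : realFieldType, vectors x in R^{N+1} represented as
   x : nat -> R with 1-based indices 1..N+1 (other values irrelevant). *)
From HB Require Import structures.
From mathcomp Require Import all_boot all_order all_algebra.
Set Implicit Arguments. Unset Strict Implicit. Unset Printing Implicit Defensive.
Import Order.TTheory GRing.Theory Num.Theory.
Local Open Scope ring_scope.

Section AoI.
Variable R : realFieldType.

Definition aoi_obj (N : nat) (x : nat -> R) : R :=
  \sum_(1 <= i < N.+2) x i ^+ 2.

Definition feasPe (N : nat) (d : R) (s : nat -> R) (T : R) (x : nat -> R) : Prop :=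
  (forall k : nat, (1 <= k <= N)%N -> s k + k%:R * d <= \sum_(1 <= i < k.+1) x i) /\
  \sum_(1 <= i < N.+2) x i = T + N%:R * d.

Definition feasP (N : nat) (d : R) (s : nat -> R) (T : R) (x : nat -> R) : Prop :=
  feasPe N d s T x /\
  (forall i : nat, (2 <= i <= N)%N -> 2%:R * d <= x i) /\
  d <= x N.+1.

Definition is_optimal (N : nat) (feas : (nat -> R) -> Prop) (x : nat -> R) : Prop :=
  feas x /\ forall y, feas y -> aoi_obj N x <= aoi_obj N y.

Definition violates (N : nat) (d : R) (x : nat -> R) (i : nat) : Prop :=
  if (i <= N)%N then x i < 2%:R * d else x i < d.

End AoI.

(* Main.v *)
From HB Require Import structures.
From mathcomp Require Import all_boot all_order all_algebra.
From mathcomp Require Import ring lra zify.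
Require Import Defs.
Set Implicit Arguments. Unset Strict Implicit. Unset Printing Implicit Defensive.
Import Order.TTheory GRing.Theory Num.Theory.
Local Open Scope ring_scope.


Section Aux.
Variable R : realFieldType.
Implicit Types (x y z w b : nat -> R).

Definition ps (k : nat) (x : nat -> R) := \sum_(1 <= i < k.+1) x i.

Lemma ps0 x : ps 0 x = 0. Proof. by rewrite /ps big_geq. Qed.
Lemma psS x k : ps k.+1 x = ps k x + x k.+1.
Proof. by rewrite /ps big_nat_recr. Qed.
Lemma ps1 x : ps 1 x = x 1%N.
Proof. by rewrite psS ps0 add0r. Qed.
Lemma ps_ext x y k : (forall i, (1 <= i <= k)%N -> x i = y i) -> ps k x = ps k y.
Proof. move=> H; apply: eq_big_nat => i /andP[h1 h2]; apply: H; lia. Qed.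
Lemma psB x y k : ps k (fun i => x i - y i) = ps k x - ps k y.
Proof. by rewrite /ps sumrB. Qed.
Lemma ps_le x y k : (forall i, (1 <= i <= k)%N -> x i <= y i) -> ps k x <= ps k y.
Proof. move=> H; apply: ler_sum_nat => i /andP[h1 h2]; apply: H; lia. Qed.
Lemma ps_split x m n : (m <= n)%N ->
  ps n x = ps m x + \sum_(m.+1 <= i < n.+1) x i.
Proof. by move=> h; rewrite /ps (big_cat_nat _ (n := m.+1)). Qed.

Lemma sum_ind (f : nat -> R) k j :
  \sum_(1 <= i < j.+1) f i * (i == k)%:R = if (1 <= k <= j)%N then f k else 0.
Proof.
elim: j => [|j IH].
  rewrite big_geq //. by have -> : (1 <= k <= 0)%N = false by lia.
rewrite big_nat_recr //= IH.
have [<-|ne] := eqVneq j.+1 k.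
  rewrite mulr1; case: ifP; case: ifP => //; try lia; move=> *; rewrite ?add0r //.
rewrite mulr0 addr0.
case: ifP; case: ifP => //; move: ne; lia.
Qed.

Lemma sum_ind1 k j :
  \sum_(1 <= i < j.+1) ((i == k)%:R : R) = ((1 <= k <= j)%N)%:R.
Proof.
have <- : \sum_(1 <= i < j.+1) (1 * (i == k)%:R : R) = \sum_(1<=i<j.+1) ((i==k)%:R:R).
  by apply: eq_bigr => i _; rewrite mul1r.
by rewrite sum_ind; case: ifP.
Qed.

Definition pert x k (del : R) :=
  fun i => x i + del * ((i == k)%:R - (i == k.+1)%:R).

Lemma ps_pert x k del j : ps j (pert x k del) =
  ps j x + del * (((1 <= k <= j)%N)%:R - ((1 <= k.+1 <= j)%N)%:R).
Proof.
rewrite /ps /pert big_split /= -mulr_sumr sumrB.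
rewrite !sum_ind1.
by [].
Qed.

Lemma obj_pert N x k del : (1 <= k <= N)%N ->
  aoi_obj N (pert x k del) = aoi_obj N x + 2 * del * (x k - x k.+1) + 2 * del ^+ 2.
Proof.
move=> hk; rewrite /aoi_obj /pert.
rewrite (eq_bigr (fun i => x i ^+ 2 + ((2 * del * x i + del ^+ 2) * (i == k)%:R
   + (del ^+ 2 - 2 * del * x i) * (i == k.+1)%:R))); last first.
  move=> i _.
  have [->|ne] := eqVneq i k.
    have hk1 : (k == k.+1) = false by lia.
    rewrite hk1 /=; ring.
  have [->|ne2] := eqVneq i k.+1.
    rewrite /=; ring.
  rewrite /=; ring.
rewrite big_split /= big_split /= !sum_ind.
have -> : (1 <= k <= N.+1)%N = true by lia.
have -> : (1 <= k.+1 <= N.+1)%N = true by lia.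
ring.
Qed.

Lemma abel n b w : \sum_(1 <= i < n.+2) b i * w i =
  \sum_(1 <= k < n.+1) (b k - b k.+1) * ps k w + b n.+1 * ps n.+1 w.
Proof.
elim: n => [|n IH].
  by rewrite big_nat1 [X in _ = X + _]big_geq // add0r ps1.
rewrite big_nat_recr //= IH [in RHS]big_nat_recr //= (psS w n.+1). ring.
Qed.

Lemma ps_pert' x k del j : (1 <= k)%N ->
  ps j (pert x k del) = ps j x + (if j == k then del else 0).
Proof.
move=> hk; rewrite ps_pert.
have [->|ne] := eqVneq j k.
  have -> : (1 <= k <= k)%N = true by lia.
  have -> : (1 <= k.+1 <= k)%N = false by lia.
  by rewrite /= subr0 mulr1.
case: (boolP (1 <= k <= j)%N) => h1; case: (boolP (1 <= k.+1 <= j)%N) => h2.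
- by rewrite subrr mulr0.
- exfalso; move: ne h1 h2; lia.
- exfalso; move: ne h1 h2; lia.
- by rewrite subrr mulr0.
Qed.

Lemma ps_ge0 x n : (forall i, (1 <= i <= n)%N -> 0 <= x i) -> 0 <= ps n x.
Proof. move=> H; rewrite /ps big_nat_cond; apply: sumr_ge0 => i /andP[h _]; apply: H; lia. Qed.

Lemma sum_ge0_nat x m n : (forall i, (m <= i < n)%N -> 0 <= x i) -> 0 <= \sum_(m <= i < n) x i.
Proof. move=> H; rewrite big_nat_cond; apply: sumr_ge0 => i /andP[h _]; apply: H; lia. Qed.

Lemma term_le_ps x n i : (forall j, (1 <= j <= n)%N -> 0 <= x j) -> (1 <= i <= n)%N ->
  x i <= ps n x.
Proof.
move=> H hi.
case: i hi => [|i'] hi; first by lia.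
rewrite (ps_split x (m := i'.+1)); last by lia.
rewrite psS.
have h1 : 0 <= ps i' x by apply: ps_ge0 => j hj; apply: H; lia.
have h2 : 0 <= \sum_(i'.+2 <= j < n.+1) x j by apply: sum_ge0_nat => j hj; apply: H; lia.
lra.
Qed.

Lemma uniq_opt N (F : (nat -> R) -> Prop) y x : F y ->
  (forall z, F z -> 0 <= \sum_(1 <= i < N.+2) y i * (z i - y i)) ->
  is_optimal N F x -> forall i, (1 <= i <= N.+1)%N -> x i = y i.
Proof.
move=> Fy VI [Fx Hopt].
have h1 := Hopt y Fy. have h2 := VI x Fx.
have E : aoi_obj N x = aoi_obj N y + 2 * \sum_(1 <= i < N.+2) y i * (x i - y i)
   + \sum_(1 <= i < N.+2) (x i - y i) ^+ 2.
  rewrite /aoi_obj mulr_sumr -!big_split /=; apply: eq_bigr => i _; ring.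
have h3 : 0 <= \sum_(1 <= i < N.+2) (x i - y i) ^+ 2.
  by apply: sumr_ge0 => i _; apply: sqr_ge0.
have h4 : \sum_(1 <= i < N.+2) (x i - y i) ^+ 2 = 0 by lra.
move=> i hi.
have : (x i - y i) ^+ 2 = 0.
  have h5 := term_le_ps (x := fun i => (x i - y i) ^+ 2) (n := N.+1) (i := i).
  have h6 : (x i - y i) ^+ 2 <= 0.
    rewrite -h4; apply: h5 => // j _; apply: sqr_ge0.
  by apply/eqP; rewrite eq_le h6 sqr_ge0.
by move/eqP; rewrite sqrf_eq0 subr_eq0 => /eqP.
Qed.

End Aux.


Section XE.
Variable R : realFieldType.
Variables (N : nat) (d T : R) (s : nat -> R) (xe : nat -> R).
Hypothesis opt : is_optimal N (feasPe N d s T) xe.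

Lemma feasPe_pert k del : (1 <= k <= N)%N ->
  (forall j, (1 <= j <= N)%N -> j = k -> s j + j%:R * d <= ps j xe + del) ->
  feasPe N d s T (pert xe k del).
Proof.
move=> hk H; have [[Hpre Htot] _] := opt.
split.
- move=> j hj; change (s j + j%:R * d <= ps j (pert xe k del)).
  rewrite ps_pert'; last by lia.
  have [e|ne] := eqVneq j k.
    by apply: H.
  by rewrite addr0; apply: Hpre.
- change (ps N.+1 (pert xe k del) = T + N%:R * d).
  rewrite ps_pert'; last by lia.
  have -> : (N.+1 == k) = false by lia.
  by rewrite addr0; apply: Htot.
Qed.

Lemma xe_noninc k : (1 <= k <= N)%N -> xe k.+1 <= xe k.
Proof.
move=> hk; rewrite leNgt; apply/negP => hlt.
have [[Hpre Htot] Hopt] := opt.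
set del := (xe k.+1 - xe k) / 2.
have hdel : 0 < del by rewrite divr_gt0 // subr_gt0.
have F : feasPe N d s T (pert xe k del).
  apply: feasPe_pert => // j hj ->.
  have h : s k + k%:R * d <= ps k xe := Hpre k hk; lra.
have := Hopt _ F; rewrite obj_pert //.
have -> : xe k - xe k.+1 = - (2 * del) by rewrite /del; field.
nra.
Qed.

Lemma xe_tight k : (1 <= k <= N)%N -> xe k.+1 < xe k -> ps k xe = s k + k%:R * d.
Proof.
move=> hk hlt.
have [[Hpre Htot] Hopt] := opt.
have h0 : s k + k%:R * d <= ps k xe by apply: Hpre.
apply/eqP; rewrite eq_le h0 andbT leNgt; apply/negP => hgt.
set eps := Num.min ((xe k - xe k.+1) / 2) (ps k xe - (s k + k%:R * d)).
have he1 : eps <= (xe k - xe k.+1) / 2 by rewrite /eps ge_min lexx.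
have he2 : eps <= ps k xe - (s k + k%:R * d) by rewrite /eps ge_min lexx orbT.
have he0 : 0 < eps by rewrite /eps lt_min divr_gt0 ?subr_gt0.
have F : feasPe N d s T (pert xe k (- eps)).
  apply: feasPe_pert => // j hj ->; lra.
have := Hopt _ F; rewrite obj_pert //.
nra.
Qed.

Lemma xe_kink z k : feasPe N d s T z -> (1 <= k <= N)%N ->
  0 <= (xe k - xe k.+1) * (ps k z - ps k xe).
Proof.
move=> [Hz _] hk.
have hn := xe_noninc hk.
case: (ltrP (xe k.+1) (xe k)) => h.
  rewrite (xe_tight hk h); apply: mulr_ge0; first lra.
  have h' : s k + k%:R * d <= ps k z := Hz k hk; lra.
have -> : xe k - xe k.+1 = 0 by lra.
by rewrite mul0r.
Qed.

Lemma xe_VI z : feasPe N d s T z -> 0 <= \sum_(1 <= i < N.+2) xe i * (z i - xe i).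
Proof.
move=> Fz.
rewrite (abel N xe (fun i => z i - xe i)) !psB.
have [[_ Htot] _] := opt.
have -> : ps N.+1 z - ps N.+1 xe = 0.
  by have := Fz.2; have := Htot; rewrite /ps => -> ->; rewrite subrr.
rewrite mulr0 addr0 big_nat_cond; apply: sumr_ge0 => i /andP[hi _].
rewrite psB; apply: (xe_kink Fz); lia.
Qed.

Lemma xe_chain i j : (1 <= i)%N -> (i <= j)%N -> (j <= N.+1)%N -> xe j <= xe i.
Proof.
move=> h1 h2 h3; elim: j h2 h3 => [|j IH] h2 h3; first by lia.
case: (leqP i j) => hij.
  apply: le_trans (IH hij _); last by lia.
  apply: xe_noninc; lia.
have -> : j.+1 = i by lia.
by [].
Qed.

End XE.


Section Aux3.
Variable R : realFieldType.
Implicit Types (x : nat -> R).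

Lemma sum_const_eq x (c : R) m n : (forall i, (m <= i < n)%N -> x i = c) ->
  \sum_(m <= i < n) x i = (n - m)%:R * c.
Proof. by move=> H; rewrite (eq_big_nat _ _ H) sumr_const_nat mulr_natl. Qed.

Lemma sum_const_le x (c : R) m n : (forall i, (m <= i < n)%N -> x i <= c) ->
  \sum_(m <= i < n) x i <= (n - m)%:R * c.
Proof. by move=> H; rewrite mulr_natl -sumr_const_nat; apply: ler_sum_nat. Qed.

Lemma sum_const_ge x (c : R) m n : (forall i, (m <= i < n)%N -> c <= x i) ->
  (n - m)%:R * c <= \sum_(m <= i < n) x i.
Proof. by move=> H; rewrite mulr_natl -sumr_const_nat; apply: ler_sum_nat. Qed.

Lemma ps_const (c : R) k : ps k (fun _ => c) = k%:R * c.
Proof. by rewrite /ps (sum_const_eq (c := c)) // subn1. Qed.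

Lemma bigmax_ge (F : nat -> R) z0 n k : (1 <= k <= n)%N ->
  F k <= \big[Num.max/z0]_(1 <= i < n.+1) F i.
Proof.
move=> hk; apply: le_bigmax_seq => //; rewrite mem_index_iota; lia.
Qed.

Lemma bigmax_cases (F : nat -> R) z0 (r : seq nat) :
  \big[Num.max/z0]_(i <- r) F i = z0 \/
  exists2 i, i \in r & \big[Num.max/z0]_(i <- r) F i = F i.
Proof.
elim: r => [|h t IH]; first by rewrite big_nil; left.
rewrite big_cons maxEle; case: ifP => _.
  case: IH => [->|[i hi ->]]; [left | right; exists i] => //.
  by rewrite inE hi orbT.
by right; exists h => //; rewrite inE eqxx.
Qed.

Lemma bigmax_arg (F : nat -> R) z0 n : z0 = F 1%N -> (1 <= n)%N ->
  exists k, (1 <= k <= n)%N /\ \big[Num.max/z0]_(1 <= i < n.+1) F i = F k.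
Proof.
move=> e0 hn.
case: (bigmax_cases F z0 (index_iota 1 n.+1)) => [->|[i hi ->]].
  by exists 1%N; split => //; lia.
by exists i; split => //; move: hi; rewrite mem_index_iota; lia.
Qed.

Lemma feas_bound N (d T : R) s (z0 : nat -> R) k : feasP N d s T z0 -> (1 <= k <= N)%N ->
  s k + k%:R * d + (N - k)%:R * (2%:R * d) + d <= T + N%:R * d.
Proof.
move=> [[Hpre Htot] [Hmid Hlast]] hk.
have e : ps N.+1 z0 = T + N%:R * d := Htot.
rewrite psS (ps_split _ (m := k)) in e; last by lia.
have h1 : s k + k%:R * d <= ps k z0 := Hpre k hk.
have h2 : (N.+1 - k.+1)%:R * (2%:R * d) <= \sum_(k.+1 <= i < N.+1) z0 i.
  by apply: sum_const_ge => i hi; apply: Hmid; lia.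
rewrite subSS in h2.
lra.
Qed.

End Aux3.


Ltac nlia := repeat match goal with
 | H : ?T |- _ => lazymatch type of T with Prop =>
     lazymatch T with
     | context[leq _ _] => fail
     | @eq nat _ _ => fail
     | _ => clear H
     end end
 end; lia.

Theorem theorem2 (R : realFieldType) (N : nat) (d T : R) (s : nat -> R)
    (xs xe : nat -> R) :
  (1 <= N)%N -> 0 < d ->
  0 <= s 1%N ->
  (forall i j : nat, (1 <= i)%N -> (i <= j)%N -> (j <= N)%N -> s i <= s j) ->
  (N.+1)%:R * d <= T ->
  (exists x, feasP N d s T x) ->
  is_optimal N (feasP N d s T) xs ->
  is_optimal N (feasPe N d s T) xe ->
  ((forall i : nat, (2 <= i <= N.+1)%N -> ~ violates N d xe i) ->
     forall i : nat, (1 <= i <= N.+1)%N -> xs i = xe i) /\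
  (forall n0 : nat, (2 <= n0 <= N.+1)%N -> violates N d xe n0 ->
     (forall i : nat, (2 <= i < n0)%N -> ~ violates N d xe i) ->
     (n0 <= N)%N /\
     (((2 < n0)%N \/ xe 1%N = s 1%N + d) ->
        (forall i : nat, (1 <= i <= n0.-1)%N -> xs i = xe i) /\
        (forall i : nat, (n0 <= i <= N)%N -> xs i = 2%:R * d) /\
        xs N.+1 = T + N%:R * d - \sum_(1 <= i < N.+1) xs i) /\
     ((n0 = 2%N /\ xe 1%N <> s 1%N + d) ->
        xs 1%N = Num.max ((T - (N%:R - 2%:R) * d) / 2%:R)
                   (\big[Num.max/s 1%N + d]_(1 <= k < N.+1) (s k - (k%:R - 2%:R) * d)) /\
        (forall i : nat, (2 <= i <= N)%N -> xs i = 2%:R * d) /\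
        xs N.+1 = T - (N%:R - 2%:R) * d - xs 1%N)).
Proof.
move=> hN hd hs1 hsm hT [x0 Fx0] Hxs Hxe.
have [[Hpre Htot] Hopt] := Hxe.
have HtotE : ps N xe + xe N.+1 = T + N%:R * d by rewrite -psS; exact: Htot.
have HxsT : ps N xs + xs N.+1 = T + N%:R * d by rewrite -psS; exact: Hxs.1.1.2.
split.
  move=> Hnv i hi.
  apply: (uniq_opt (N := N) (F := feasP N d s T) (y := xe) _ _ Hxs) => //.
    split; first exact: Hxe.1.
    split.
      move=> j hj; have := Hnv j ltac:(nlia); rewrite /violates.
      have -> : (j <= N)%N = true by nlia.
      by move=> h; rewrite leNgt; apply/negP.
    have := Hnv N.+1 ltac:(nlia); rewrite /violates.
    have -> : (N.+1 <= N)%N = false by nlia.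
    by move=> h; rewrite leNgt; apply/negP.
  by move=> z Fz; apply: (xe_VI Hxe Fz.1).
move=> n0 hn0 Hv Hnv.
have hn0N : (n0 <= N)%N.
  rewrite leqNgt; apply/negP => hgt.
  have e : n0 = N.+1 by nlia.
  subst n0.
  move: Hv; rewrite /violates.
  have -> : (N.+1 <= N)%N = false by nlia.
  move=> hv.
  have hb := feas_bound Fx0 (k := N) ltac:(nlia).
  rewrite subnn mul0r addr0 in hb.
  case: (ltrP (xe N.+1) (xe N)) => h.
    have := xe_tight Hxe (k := N) ltac:(nlia) h.
    lra.
  case: (leqP 2 N) => hN2.
    have := Hnv N ltac:(nlia); rewrite /violates.
    have -> : (N <= N)%N = true by nlia.
    move=> h2; have h3 : 2%:R * d <= xe N by rewrite leNgt; apply/negP.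
    lra.
  have eN : N = 1%N by nlia.
  subst N.
  rewrite ps1 in HtotE.
  have : 2%:R * d <= T by [].
  lra.
split; first exact: hn0N.
split.
  move=> Hc.
  have [m em] : exists m, n0 = m.+1 by exists n0.-1; nlia.
  subst n0; rewrite /=.
  have hm1 : (1 <= m)%N by nlia.
  have hmN : (m < N)%N by nlia.
  have hvm : xe m.+1 < 2%:R * d.
    by move: Hv; rewrite /violates; have -> : (m.+1 <= N)%N = true by nlia.
  have Htight : ps m xe = s m + m%:R * d.
    case: (ltnP 2 m.+1) => h2.
      apply: (xe_tight Hxe); first nlia.
      have := Hnv m ltac:(nlia); rewrite /violates.
      have -> : (m <= N)%N = true by nlia.
      move=> h1; have h1' : 2%:R * d <= xe m by rewrite leNgt; apply/negP.
      lra.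
    have em1 : m = 1%N by nlia.
    subst m.
    case: Hc => [h|h]; first nlia.
    by rewrite ps1 h mul1r.
  pose c := T + N%:R * d - ps m xe - (N - m)%:R * (2%:R * d).
  pose y := fun i => if (i <= m)%N then xe i else if (i <= N)%N then 2%:R * d else c.
  have hlow : forall i, (m < i <= N.+1)%N -> xe i < 2%:R * d.
    move=> i hi; apply: le_lt_trans hvm.
    apply: (xe_chain Hxe); nlia.
  have hsum_le : \sum_(m.+1 <= i < N.+1) xe i <= (N - m)%:R * (2%:R * d).
    rewrite -subSS; apply: sum_const_le => i hi; apply/ltW/hlow; nlia.
  have psxeN : ps N xe = ps m xe + \sum_(m.+1 <= i < N.+1) xe i.
    by apply: ps_split; nlia.
  have hcx : c <= xe N.+1 by rewrite /c; lra.
  have hc2 : c < 2%:R * d.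
    have := hlow N.+1 ltac:(nlia); lra.
  have hxm : c <= xe m.
    apply: le_trans hcx _; apply: (xe_chain Hxe); nlia.
  have psy_low : forall k, (k <= m)%N -> ps k y = ps k xe.
    move=> k hk; apply: ps_ext => i hi; rewrite /y.
    by have -> : (i <= m)%N = true by nlia.
  have psy_mid : forall k, (m <= k <= N)%N -> ps k y = ps m xe + (k - m)%:R * (2%:R * d).
    move=> k hk; rewrite (ps_split _ (m := m)); last nlia.
    rewrite psy_low // (sum_const_eq (c := 2%:R * d)) ?subSS //.
    move=> i hi; rewrite /y.
    have -> : (i <= m)%N = false by nlia.
    by have -> : (i <= N)%N = true by nlia.
  have yN : y N.+1 = c.
    rewrite /y.
    have -> : (N.+1 <= m)%N = false by nlia.
    by have -> : (N.+1 <= N)%N = false by nlia.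
  have psyT : ps N.+1 y = T + N%:R * d.
    rewrite psS psy_mid; last nlia.
    rewrite yN /c; ring.
  have Fy : feasP N d s T y.
    split; [split|split].
    - move=> k hk; change (s k + k%:R * d <= ps k y).
      case: (leqP k m) => hkm.
        rewrite psy_low //; exact: Hpre k hk.
      rewrite psy_mid; last nlia.
      have h : s k + k%:R * d <= ps k xe := Hpre k hk.
      rewrite (ps_split _ (m := m)) in h; last nlia.
      have h2 : \sum_(m.+1 <= i < k.+1) xe i <= (k - m)%:R * (2%:R * d).
        rewrite -subSS; apply: sum_const_le => i hi; apply/ltW/hlow; nlia.
      lra.
    - exact: psyT.
    - move=> i hi; rewrite /y.
      case: ifP => him.
        have := Hnv i ltac:(nlia); rewrite /violates.
        have -> : (i <= N)%N = true by nlia.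
        by move=> h; rewrite leNgt; apply/negP.
      by have -> : (i <= N)%N = true by nlia.
    - rewrite yN /c.
      have hb := feas_bound Fx0 (k := m) ltac:(nlia).
      lra.
  have VIy : forall z, feasP N d s T z -> 0 <= \sum_(1 <= i < N.+2) y i * (z i - y i).
    move=> z [[Hzp Hzt] [Hzm Hzl]].
    have Fze : feasPe N d s T z by split.
    change (0 <= ps N.+1 (fun i => y i * (z i - y i))).
    rewrite psS (ps_split _ (m := m)); last nlia.
    have e1 : ps m (fun i => y i * (z i - y i)) = ps m (fun i => xe i * (z i - xe i)).
      apply: ps_ext => i hi; rewrite /y.
      by have -> : (i <= m)%N = true by nlia.
    have e2 : \sum_(m.+1 <= i < N.+1) y i * (z i - y i)
            = 2%:R * d * \sum_(m.+1 <= i < N.+1) (z i - 2%:R * d).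
      rewrite mulr_sumr; apply: eq_big_nat => i hi; rewrite /y.
      have -> : (i <= m)%N = false by nlia.
      by have -> : (i <= N)%N = true by nlia.
    rewrite e1 e2 yN.
    set Mid := \sum_(m.+1 <= i < N.+1) (z i - 2%:R * d).
    have hMid : 0 <= Mid.
      apply: sum_ge0_nat => i hi; rewrite subr_ge0; apply: Hzm; nlia.
    have hW : 0 <= ps m z - ps m xe.
      have : s m + m%:R * d <= ps m z := Hzp m ltac:(nlia).
      lra.
    have hzt : ps N.+1 z = T + N%:R * d := Hzt.
    rewrite psS (ps_split _ (m := m)) in hzt; last nlia.
    have eMid : Mid = \sum_(m.+1 <= i < N.+1) z i - (N - m)%:R * (2%:R * d).
      rewrite /Mid sumrB; congr (_ - _); rewrite sumr_const_nat subSS; exact: esym (mulr_natl _ _).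
    have hrel : z N.+1 - c = - (ps m z - ps m xe) - Mid.
      rewrite eMid /c; lra.
    have hS1 : c * (ps m z - ps m xe) <= ps m (fun i => xe i * (z i - xe i)).
      have [m' em'] : exists m', m = m'.+1 by exists m.-1; nlia.
      have -> : ps m (fun i => xe i * (z i - xe i)) =
                \sum_(1 <= i < m'.+2) xe i * (z i - xe i) by rewrite em'.
      rewrite (abel m' xe (fun i => z i - xe i)) psB em'.
      have hsum : 0 <= \sum_(1 <= k < m'.+1) (xe k - xe k.+1) * ps k (fun i => z i - xe i).
        apply: sum_ge0_nat => k hk; rewrite psB; apply: (xe_kink Hxe Fze); nlia.
      have hp : 0 <= (xe m'.+1 - c) * (ps m'.+1 z - ps m'.+1 xe).
        by rewrite -em'; apply: mulr_ge0; lra.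
      lra.
    rewrite hrel.
    have hp2 : 0 <= (2%:R * d - c) * Mid by apply: mulr_ge0; lra.
    lra.
  have Hxy := uniq_opt Fy VIy Hxs.
  split.
    move=> i hi; rewrite Hxy; last nlia.
    by rewrite /y; have -> : (i <= m)%N = true by nlia.
  split.
    move=> i hi; rewrite Hxy; last nlia.
    rewrite /y; have -> : (i <= m)%N = false by nlia.
    by have -> : (i <= N)%N = true by nlia.
  change (xs N.+1 = T + N%:R * d - ps N xs); lra.
move=> [e2 hne]; subst n0.
have hN2 : (2 <= N)%N by [].
have hx1 : s 1%N + d < xe 1%N.
  have h : s 1%N + 1%:R * d <= ps 1 xe := Hpre 1%N ltac:(nlia).
  rewrite ps1 mul1r in h.
  by rewrite lt_neqAle h andbT; apply/eqP => e; apply: hne.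
have hx2 : xe 2 < 2%:R * d.
  by move: Hv; rewrite /violates; have -> : (2 <= N)%N = true by [].
have hx12 : xe 1%N <= xe 2.
  rewrite leNgt; apply/negP => h.
  have := xe_tight Hxe (k := 1%N) ltac:(nlia) h.
  rewrite ps1 mul1r => e; apply: hne; exact: e.
have hxall : forall i, (1 <= i <= N.+1)%N -> xe i <= xe 1%N.
  move=> i hi; apply: (xe_chain Hxe); nlia.
have hpsk : forall k, (1 <= k <= N.+1)%N -> ps k xe < k%:R * (2%:R * d).
  move=> k hk.
  have h1 : ps k xe <= ps k (fun _ => xe 1%N) by apply: ps_le => i hi; apply: hxall; nlia.
  rewrite ps_const in h1.
  have hk0 : (0 : R) < k%:R by rewrite ltr0n; nlia.
  have : k%:R * xe 1%N < k%:R * (2%:R * d) by rewrite ltr_pM2l //; lra.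
  lra.
pose B := T - (N%:R - 2%:R) * d.
pose F := fun k : nat => s k - (k%:R - 2%:R) * d.
have eF1 : s 1%N + d = F 1%N by rewrite /F; ring.
pose M := \big[Num.max/s 1%N + d]_(1 <= k < N.+1) F k.
have hMk : forall k, (1 <= k <= N)%N -> F k <= M.
  by move=> k hk; apply: bigmax_ge.
have [k0 [hk0 eM]] : exists k0, (1 <= k0 <= N)%N /\ M = F k0.
  exact: (bigmax_arg eF1 hN).
have hM2 : M <= 2%:R * d.
  rewrite eM /F.
  have h1 := hpsk k0 ltac:(nlia).
  have h2 : s k0 + k0%:R * d <= ps k0 xe := Hpre k0 hk0.
  lra.
have hMB : M <= B - d.
  rewrite eM /F /B.
  have hb := feas_bound Fx0 hk0.
  rewrite natrB in hb; last nlia.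
  lra.
have hTN : N%:R * d + d <= T by move: hT; rewrite -natr1 mulrDl mul1r.
have hB2 : 2%:R * d <= B by rewrite /B; lra.
pose y1 := Num.max (B / 2%:R) M.
have hy1B : B / 2%:R <= y1 by rewrite /y1 le_max lexx.
have hy1M : M <= y1 by rewrite /y1 le_max lexx orbT.
have hy1le : y1 <= B - d by rewrite /y1 ge_max hMB andbT; lra.
have hy1c : y1 = B / 2%:R \/ y1 = M by rewrite /y1 maxEle; case: ifP; [right|left].
pose c := B - y1.
have hA : T + N%:R * d < N.+1%:R * (2%:R * d).
  have := hpsk N.+1 ltac:(nlia); rewrite psS HtotE; lra.
have hc2 : c < 2%:R * d.
  have hN1 : N.+1%:R = N%:R + 1 :> R by rewrite natr1.
  move: hA; rewrite hN1 => hA.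
  have eB : B = T - (N%:R - 2%:R) * d by [].
  have ec : c = B - y1 by [].
  lra.
pose y := fun i => if (i <= 1)%N then y1 else if (i <= N)%N then 2%:R * d else c.
have psy : forall k, (1 <= k <= N)%N -> ps k y = y1 + (k%:R - 1) * (2%:R * d).
  move=> k hk; rewrite (ps_split _ (m := 1%N)); last nlia.
  rewrite ps1 (sum_const_eq (c := 2%:R * d)).
    by rewrite subSS natrB; last nlia.
  move=> i hi; rewrite /y.
  have -> : (i <= 1)%N = false by nlia.
  by have -> : (i <= N)%N = true by nlia.
have yN : y N.+1 = c.
  rewrite /y.
  have -> : (N.+1 <= 1)%N = false by nlia.
  by have -> : (N.+1 <= N)%N = false by nlia.
have psyT : ps N.+1 y = T + N%:R * d.
  rewrite psS psy; last nlia.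
  rewrite yN /c /B; ring.
have Fy : feasP N d s T y.
  split; [split|split].
  - move=> k hk; change (s k + k%:R * d <= ps k y).
    rewrite psy //.
    have := hMk k hk; rewrite /F => h.
    lra.
  - exact: psyT.
  - move=> i hi; rewrite /y.
    have -> : (i <= 1)%N = false by nlia.
    by have -> : (i <= N)%N = true by nlia.
  - rewrite yN /c; lra.
have VIy : forall z, feasP N d s T z -> 0 <= \sum_(1 <= i < N.+2) y i * (z i - y i).
  move=> z [[Hzp Hzt] [Hzm Hzl]].
  change (0 <= ps N.+1 (fun i => y i * (z i - y i))).
  rewrite psS (ps_split _ (m := 1%N)); last nlia.
  rewrite ps1 yN.
  have e2 : \sum_(2 <= i < N.+1) y i * (z i - y i)
          = 2%:R * d * \sum_(2 <= i < N.+1) (z i - 2%:R * d).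
    rewrite mulr_sumr; apply: eq_big_nat => i hi; rewrite /y.
    have -> : (i <= 1)%N = false by nlia.
    by have -> : (i <= N)%N = true by nlia.
  rewrite e2.
  have ey1 : y 1%N = y1 by [].
  rewrite ey1.
  set Mid := \sum_(2 <= i < N.+1) (z i - 2%:R * d).
  have hMid : 0 <= Mid.
    apply: sum_ge0_nat => i hi; rewrite subr_ge0; apply: Hzm; nlia.
  have hzt : ps N.+1 z = T + N%:R * d := Hzt.
  rewrite psS (ps_split _ (m := 1%N)) ?ps1 in hzt; last nlia.
  have eMid : Mid = \sum_(2 <= i < N.+1) z i - (N%:R - 1) * (2%:R * d).
    rewrite /Mid sumrB; congr (_ - _); rewrite sumr_const_nat subSS.
    rewrite -(mulr_natl (2%:R * d) (N - 1)) natrB //; nlia.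
  have hrel : z N.+1 - c = - (z 1%N - y1) - Mid.
    rewrite eMid /c /B; lra.
  rewrite hrel.
  have hcy : c <= y1 by rewrite /c; lra.
  case: (lerP y1 c) => hyc.
    have ey : y1 = c by apply/eqP; rewrite eq_le hyc hcy.
    rewrite -ey.
    have hp : 0 <= (2%:R * d - y1) * Mid by apply: mulr_ge0; lra.
    lra.
  have ey : y1 = M.
    case: hy1c => // e; exfalso; move: hyc; rewrite /c e; lra.
  pose Mk := \sum_(2 <= i < k0.+1) (z i - 2%:R * d).
  have hMk0 : 0 <= Mk.
    apply: sum_ge0_nat => i hi; rewrite subr_ge0; apply: Hzm; nlia.
  have hMkMid : Mk <= Mid.
    rewrite /Mid (big_cat_nat _ (n := k0.+1)) /=; [|nlia|nlia].
    have : 0 <= \sum_(k0.+1 <= i < N.+1) (z i - 2%:R * d).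
      apply: sum_ge0_nat => i hi; rewrite subr_ge0; apply: Hzm; nlia.
    rewrite /Mk; lra.
  have hW : 0 <= z 1%N - y1 + Mk.
    have h : s k0 + k0%:R * d <= ps k0 z := Hzp k0 hk0.
    rewrite (ps_split _ (m := 1%N)) ?ps1 in h; last nlia.
    have eMk : Mk = \sum_(2 <= i < k0.+1) z i - (k0%:R - 1) * (2%:R * d).
      rewrite /Mk sumrB; congr (_ - _); rewrite sumr_const_nat subSS.
      rewrite -(mulr_natl (2%:R * d) (k0 - 1)) natrB //; nlia.
    rewrite eMk ey eM /F; lra.
  have hp1 : 0 <= (y1 - c) * (z 1%N - y1 + Mk) by apply: mulr_ge0; lra.
  have hp2 : 0 <= (2%:R * d - y1) * Mk by apply: mulr_ge0; lra.
  have hp3 : 0 <= (2%:R * d - c) * (Mid - Mk) by apply: mulr_ge0; lra.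
  lra.
have Hxy := uniq_opt Fy VIy Hxs.
have ex1 : xs 1%N = y1 by rewrite Hxy.
split.
  by rewrite ex1.
split.
  move=> i hi; rewrite Hxy; last nlia.
  rewrite /y; have -> : (i <= 1)%N = false by nlia.
  by have -> : (i <= N)%N = true by nlia.
rewrite (Hxy N.+1) ?yN ?ex1; last nlia.
by [].
Qed.
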